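(* For any $t>0$, provided that $Rr(T)\ge1$, \[\{\exists z\in L_T\setminus B(0,R): h_T(z)\le t\}\subseteq\Big\{\max_{y\in L_T(0,R)}\xi_T(y)\ge qR/t\Big\}.\] As a result, \[\mathbb{P}\big(\exists z\in L_T\setminus B(0,R): h_T(z)\le t\big)\le C_de\,q^{-\alpha}R^{d-\alpha}t^\alpha.\]
   Context: $(\xi(z))_{z\in\mathbb{Z}^d}$ are i.i.d. with $\mathbb{P}(\xi(z)>x)=x^{-\alpha}$ for $x\ge1$, $\alpha>d$. $|\cdot|$ is the $\ell_1$-norm, $B(z,R)$ the open $\ell_1$-ball. $q=d/(\alpha-d)$, $a(T)=(T/\log T)^q$, $r(T)=(T/\log T)^{q+1}$, $L_T=\{z\in\mathbb{R}^d:r(T)z\in\mathbb{Z}^d\}$, $L_T(z,R)=L_T\cap B(z,R)$, $\xi_T(z)=\xi(r(T)z)/a(T)$. For $z\in L_T$, \[h_T(z)=\inf\Big\{\sum_{j=1}^n q\frac{|y_{j-1}-y_j|}{\xi_T(y_j)}: n\ge0,\ y_0,\dots,y_n\in L_T,\ y_0=z,\ y_n=0\Big\}.\] The constant $C_d>0$ is such that $\#L_T(0,R)\le C_dR^dr(T)^d$ whenever $Rr(T)>1$. *)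

(* Defs.v *)
From HB Require Import structures.
From mathcomp Require Import all_boot all_order all_algebra.
From mathcomp Require Import all_classical all_reals all_analysis.
Set Implicit Arguments. Unset Strict Implicit. Unset Printing Implicit Defensive.
Import Order.TTheory GRing.Theory Num.Theory.
Local Open Scope classical_set_scope.
Local Open Scope ring_scope.

Section Defs.
Variables (R : realType) (d : nat) (alpha : R).

Definition norm1 (z : 'rV[R]_d) : R := \sum_(i < d) `|z ord0 i|.

Definition l1ball (z : 'rV[R]_d) (Rad : R) : set 'rV[R]_d :=
  [set y | norm1 (y - z) < Rad].

Definition qexp : R := d%:R / (alpha - d%:R).
Definition aT (T : R) : R := (T / ln T) `^ qexp.
Definition rT (T : R) : R := (T / ln T) `^ (qexp + 1).

Definition LT (T : R) (z : 'rV[R]_d) : bool :=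
  [forall i, rT T * z ord0 i \is a Num.int].

Definition LTball (T : R) (z : 'rV[R]_d) (Rad : R) : set 'rV[R]_d :=
  [set y | LT T y /\ l1ball z Rad y].

(* the lattice point r(T) y (exact when y \in L_T) *)
Definition toZ (T : R) (y : 'rV[R]_d) : 'rV[int]_d :=
  \row_i Num.floor (rT T * y ord0 i).

Definition xiT (xi : 'rV[int]_d -> R) (T : R) (y : 'rV[R]_d) : R :=
  xi (toZ T y) / aT T.

(* cost of the path y_0 = z, y_1, ..., y_n (ys = [:: y_1; ...; y_n]) *)
Definition path_cost (xi : 'rV[int]_d -> R) (T : R) (z : 'rV[R]_d)
    (ys : seq 'rV[R]_d) : R :=
  \sum_(j < size ys)
    qexp * norm1 (nth z (z :: ys) j - nth z ys j) / xiT xi T (nth z ys j).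

Definition hT (xi : 'rV[int]_d -> R) (T : R) (z : 'rV[R]_d) : R :=
  inf [set c | exists ys : seq 'rV[R]_d,
         all (LT T) ys /\ last z ys = 0 /\ c = path_cost xi T z ys].
End Defs.
Arguments norm1 {R} d z.
Arguments l1ball {R} d z Rad.
Arguments LT {R} d alpha T z.
Arguments LTball {R} d alpha T z Rad.
Arguments toZ {R} d alpha T y.
Arguments xiT {R} d alpha xi T y.
Arguments path_cost {R} d alpha xi T z ys.
Arguments hT {R} d alpha xi T z.

Definition mutually_independent d0 (Om : measurableType d0) (R : realType)
    (P : probability Om R) (I : eqType) (X : I -> {RV P >-> R}) : Prop :=
  forall (J : seq I) (B : I -> set R), uniq J ->
    (forall i, measurable (B i)) ->
    P (\big[setI/setT]_(i <- J) (X i @^-1` B i)) =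
    (\prod_(i <- J) P (X i @^-1` B i))%E.

(* Main.v *)
Require Import Defs.
From HB Require Import structures.
From mathcomp Require Import all_boot all_order all_algebra.
From mathcomp Require Import all_classical all_reals all_analysis.
From mathcomp Require Import ring lra.
Import Order.TTheory GRing.Theory Num.Theory.
Local Open Scope classical_set_scope.
Local Open Scope ring_scope.

Section Aux.
Variables (R : realType) (d : nat) (alpha : R).

Lemma norm1_ge0 (z : 'rV[R]_d) : 0 <= norm1 d z.
Proof. by apply: sumr_ge0 => i _. Qed.

Lemma norm10 : norm1 d (0 : 'rV[R]_d) = 0.
Proof. by rewrite /norm1 big1 // => i _; rewrite mxE normr0. Qed.

Lemma norm1D (a b : 'rV[R]_d) : norm1 d (a + b) <= norm1 d a + norm1 d b.
Proof.
rewrite /norm1 -big_split /=; apply: ler_sum => i _.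
by rewrite mxE ler_normD.
Qed.

Lemma path_cost_cons (xi : 'rV[int]_d -> R) T (z y : 'rV[R]_d) ys :
  path_cost d alpha xi T z (y :: ys) =
  qexp d alpha * norm1 d (z - y) / xiT d alpha xi T y + path_cost d alpha xi T y ys.
Proof.
rewrite /path_cost /= big_ord_recl /=; congr (_ + _).
apply: eq_bigr => j _ /=.
have hj : (j < size ys)%N by [].
rewrite ?add0n (set_nth_default y z hj) (set_nth_default y z (s := y :: ys)) //.
by rewrite /= ltnS ltnW.
Qed.

Lemma path_cost_lb (xi : 'rV[int]_d -> R) T (M Rad : R) :
  0 <= qexp d alpha -> 0 < M -> (forall y, 0 < xiT d alpha xi T y) ->
  (forall y, LT d alpha T y -> norm1 d y < Rad -> xiT d alpha xi T y <= M) ->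
  forall ys z, all (LT d alpha T) ys -> last z ys = 0 ->
  qexp d alpha / M * Num.min (norm1 d z) Rad <= path_cost d alpha xi T z ys.
Proof.
move=> hq hM hX hB; elim=> [|y ys IH] z /=.
  move=> _ ->; rewrite /path_cost big_ord0 norm10.
  have h0 : 0 <= qexp d alpha / M by apply: divr_ge0 => //; apply: ltW.
  have h2 : Num.min 0 Rad <= 0 by rewrite ge_min lexx.
  exact: (mulr_ge0_le0 h0 h2).
move=> /andP[Ly Lys] hl; rewrite path_cost_cons.
have := IH y Lys hl => {}IH.
have h1 : 0 <= qexp d alpha * norm1 d (z - y) / xiT d alpha xi T y.
  by apply: divr_ge0; [apply: mulr_ge0 => //; apply: norm1_ge0 | apply: ltW].
have [hy|hy] := ltP (norm1 d y) Rad.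
- have e1 : qexp d alpha / M * norm1 d (z - y) <=
       qexp d alpha * norm1 d (z - y) / xiT d alpha xi T y.
    rewrite mulrAC; apply: ler_wpM2l.
      by rewrite mulr_ge0 // norm1_ge0.
    by rewrite lef_pV2 ?posrE // hB.
  apply: le_trans (lerD e1 IH).
  rewrite -mulrDr; apply: ler_wpM2l; first by apply: divr_ge0 => //; apply: ltW.
  rewrite (min_idPl (ltW hy)).
  rewrite ge_min; apply/orP; left.
  by have := norm1D (z - y) y; rewrite subrK.
- apply: le_trans _ (lerD h1 IH); rewrite add0r.
  apply: ler_wpM2l; first by apply: divr_ge0 => //; apply: ltW.
  by rewrite (min_idPr hy) ge_min lexx orbT.
Qed.

End Aux.

Lemma max_list (R : realType) (T : eqType) (S : set T) (K : R) :
  (forall s : seq T, uniq s -> all (fun y => y \in S) s -> (size s)%:R <= K) ->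
  exists s0 : seq T, [/\ uniq s0, all (fun y => y \in S) s0 &
                         forall y, S y -> y \in s0].
Proof.
move=> hK; apply: contrapT => hno.
have hn : forall n : nat, exists s : seq T,
    [/\ uniq s, all (fun y => y \in S) s & (n <= size s)%N].
  elim=> [|n [s [us al ns]]]; first by exists [::].
  have : ~ (forall y, S y -> y \in s) by move=> h; apply: hno; exists s.
  move=> /existsNP [y /not_implyP [Sy ys]].
  exists (y :: s); split => //=.
  - by rewrite us andbT; apply/negP.
  - by rewrite al andbT; apply/mem_set.
have [s [us al ns]] := hn (Num.truncn K).+1.
have := hK s us al; apply/negP; rewrite -ltNge.
apply: (lt_le_trans (truncnS_gt K)); by rewrite ler_nat.
Qed.

Lemma argmax_list (R : realType) (T : eqType) (X : T -> R) (s : seq T) :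
  s != [::] -> exists2 m, m \in s & forall y, y \in s -> X y <= X m.
Proof.
elim: s => [//|x s IH] _.
have [->|sn] := eqVneq s [::].
  by exists x; rewrite ?mem_head // => y; rewrite inE => /eqP ->.
have [m ms hm] := IH sn.
have [hxm|hxm] := leP (X x) (X m).
  exists m; first by rewrite inE ms orbT.
  by move=> y; rewrite inE => /orP[/eqP->//|/hm].
exists x; first exact: mem_head.
move=> y; rewrite inE => /orP[/eqP->//|/hm h]; exact: (le_trans h (ltW hxm)).
Qed.

Section Emb.
Variables (R : realType) (d : nat) (alpha T : R).
Definition emb (k : 'rV[int]_d) : 'rV[R]_d := \row_i ((k ord0 i)%:~R / rT d alpha T).

Hypothesis r0 : rT d alpha T != 0.

Lemma LT_emb k : LT d alpha T (emb k).
Proof.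
apply/forallP => i; rewrite mxE mulrC divfK //; exact: intr_int.
Qed.

Lemma emb_toZ z : LT d alpha T z -> emb (toZ d alpha T z) = z.
Proof.
move=> /forallP hz; apply/rowP => i; rewrite !mxE.
have := hz i; rewrite intrEfloor => /eqP ->; by rewrite mulrC mulKf.
Qed.

Lemma toZ_emb k : toZ d alpha T (emb k) = k.
Proof.
apply/rowP => i; rewrite !mxE mulrC divfK // intrKfloor.
by rewrite (ord1 ord0).
Qed.
End Emb.

Section Meas.
Variables (d0 : measure_display) (Om : measurableType d0) (R : realType).

Lemma meas_exists_count (K : countType) (F : K -> set Om) :
  (forall k, measurable (F k)) -> measurable [set w | exists k, F k w].
Proof.
move=> mF.
have -> : [set w | exists k, F k w] =
   \bigcup_(n in [set: nat]) (if @unpickle K n is Some k then F k else set0).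
  apply/seteqP; split => w /=.
    by move=> [k Fk]; exists (pickle k) => //; rewrite pickleK.
  move=> [n _]; case: (unpickle n) => [k Fk|//]; by exists k.
apply: bigcupT_measurable => n; case: (unpickle n) => // k; exact: mF.
Qed.

Lemma meas_forall_nat (F : nat -> set Om) :
  (forall n, measurable (F n)) -> measurable [set w | forall n, F n w].
Proof.
move=> mF.
have -> : [set w | forall n, F n w] = \bigcap_(n in [set: nat]) F n.
  by apply/seteqP; split => w /= h n; [move=> _; exact: h | exact: h].
exact: bigcapT_measurable.
Qed.

Lemma meas_and (Pr : Prop) (F : set Om) :
  measurable F -> measurable [set w | Pr /\ F w].
Proof.
move=> mF; case: (pselect Pr) => hP.
  have -> : [set w | Pr /\ F w] = F by apply/seteqP; split => w /= => [[]|] //.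
  done.
have -> : [set w | Pr /\ F w] = set0 by apply/seteqP; split => w /= => [[]|] //.
exact: measurable0.
Qed.

Lemma meas_lt (f : Om -> R) c :
  measurable_fun setT f -> measurable [set w | f w < c].
Proof.
move=> mf; have := mf measurableT _ (measurable_itv `]-oo, c[).
rewrite setTI; congr measurable; apply/seteqP; split => w /=;
  by rewrite in_itv /=.
Qed.

Lemma meas_le (f : Om -> R) c :
  measurable_fun setT f -> measurable [set w | c <= f w].
Proof.
move=> mf; have := mf measurableT _ (measurable_itv `[c, +oo[).
rewrite setTI; congr measurable; apply/seteqP; split => w /=;
  by rewrite in_itv /= andbT.
Qed.
End Meas.

Lemma powRE' (R : realType) (y a : R) : 0 < y -> y `^ a = expR (a * ln y).
Proof. by move=> hy; rewrite /powR gt_eqF. Qed.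

Lemma meas_gt d0 (Om : measurableType d0) (R : realType) (f : Om -> R) c :
  measurable_fun setT f -> measurable [set w | c < f w].
Proof.
move=> mf; have := mf measurableT _ (measurable_itv `]c, +oo[).
rewrite setTI; congr measurable; apply/seteqP; split => w /=;
  by rewrite in_itv /= andbT.
Qed.

Lemma tail_le d0 (Om : measurableType d0) (R : realType) (P : probability Om R)
  (alpha : R) (f : Om -> R) (x : R) :
  0 < alpha -> measurable_fun setT f ->
  (forall x, 1 <= x -> P [set w | x < f w] = (x `^ (- alpha))%:E) -> 0 < x ->
  (P [set w | (x <= f w)%R] <= (x `^ (- alpha))%:E)%E.
Proof.
move=> ha mf hP hx0.
have mA := @meas_le _ _ _ f x mf.
have fin : P [set w | x <= f w] \is a fin_num.
  rewrite ge0_fin_numE ?measure_ge0 //.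
  by apply: (le_lt_trans (probability_le1 P mA)); rewrite ltey.
set p := fine (P [set w | x <= f w]).
have hPA : P [set w | x <= f w] = p%:E by rewrite fineK.
rewrite hPA lee_fin.
have hp1 : p <= 1 by rewrite -lee_fin -hPA; exact: probability_le1.
rewrite powRE' //.
have [hx|hx] := leP x 1.
  apply: (le_trans hp1); apply: le_trans (expR_ge1Dx _).
  rewrite lerDl; apply: mulr_le0; first by rewrite oppr_le0 ltW.
  exact: ln_le0.
set lx := ln x.
have lx0 : 0 < lx by exact: ln_gt0.
set c := expR (- alpha * lx).
have c0 : 0 < c by exact: expR_gt0.
have key : forall del, 0 < del -> del <= lx -> p <= c * expR (alpha * del).
  move=> del del0 dellx.
  set y := expR (lx - del).
  have y1 : 1 <= y.
    apply: le_trans (expR_ge1Dx _); by rewrite lerDl subr_ge0.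
  have yx : y < x.
    by rewrite /y -[ltRHS](@lnK _ x) ?posrE // ltr_expR ltrBlDr ltrDl.
  have : (P [set w | (x <= f w)%R] <= P [set w | (y < f w)%R])%E.
    apply: le_measure; rewrite ?inE //; first exact: meas_gt.
    by move=> w /= h; exact: lt_le_trans yx h.
  rewrite hP // hPA lee_fin powRE' ?(lt_le_trans ltr01) // /y expRK.
  by rewrite mulrBr [(- alpha) * del]mulNr opprK expRD.
have [//|hpc] := leP p c; exfalso.
have pc1 : 1 < p / c by rewrite ltr_pdivlMr // mul1r.
have lpc : 0 < ln (p / c) by exact: ln_gt0.
set del := Num.min lx (ln (p / c) / (2 * alpha)).
have del0 : 0 < del.
  by rewrite lt_min lx0 /= divr_gt0 // mulr_gt0.
have dl : del <= lx by rewrite ge_min lexx.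
have := key del del0 dl; apply/negP; rewrite -ltNge.
have h1 : alpha * del < ln (p / c).
  apply: (le_lt_trans (y := ln (p / c) / 2)).
    have hd : del <= ln (p / c) / (2 * alpha) by rewrite ge_min lexx orbT.
    apply: le_trans (ler_wpM2l (ltW ha) hd) _.
    rewrite le_eqVlt; apply/orP; left; apply/eqP.
    field; exact: lt0r_neq0.
  by rewrite ltr_pdivrMr // ltr_pMr // ltr1n.
have pc0 : 0 < p / c by rewrite divr_gt0 // (lt_trans c0).
have : expR (alpha * del) < p / c.
  by rewrite -[ltRHS](@lnK _ (p / c)) ?posrE // ltr_expR.
by rewrite ltr_pdivlMr // mulrC.
Qed.

Lemma qexp_gt0 {R : realType} {d : nat} {alpha : R} :
  (0 < d)%N -> d%:R < alpha -> 0 < qexp d alpha.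
Proof. by move=> d0 da; rewrite /qexp divr_gt0 ?ltr0n // subr_gt0. Qed.

Lemma rT_gt0 (R : realType) (d : nat) (alpha T : R) : 1 < T -> 0 < rT d alpha T.
Proof. by move=> hT; rewrite /rT powR_gt0 // divr_gt0 ?ln_gt0 // (lt_trans ltr01). Qed.

Lemma aT_gt0 (R : realType) (d : nat) (alpha T : R) : 1 < T -> 0 < aT d alpha T.
Proof. by move=> hT; rewrite /aT powR_gt0 // divr_gt0 ?ln_gt0 // (lt_trans ltr01). Qed.

Lemma final_arith (R : realType) (d : nat) (alpha Cd T Rad t N : R) :
  (0 < d)%N -> d%:R < alpha -> 1 < T -> 0 < Rad -> 0 < t -> 0 < Cd ->
  N <= Cd * (expR (d%:R^-1) * Rad) ^+ d * rT d alpha T ^+ d ->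
  N * (qexp d alpha * Rad / t * aT d alpha T) `^ (- alpha) <=
  Cd * expR 1 * qexp d alpha `^ (- alpha) * Rad `^ (d%:R - alpha) * t `^ alpha.
Proof.
move=> d0 da hT hR ht hC hN.
have q0 := qexp_gt0 d0 da.
have u0 : 0 < T / ln T by rewrite divr_gt0 ?ln_gt0 // (lt_trans ltr01).
have ad0 : alpha - d%:R != 0 by rewrite subr_eq0 gt_eqF.
have dn0 : d%:R != 0 :> R by rewrite pnatr_eq0 -lt0n.
have ra : rT d alpha T = expR ((qexp d alpha + 1) * ln (T / ln T))
  by rewrite /rT powRE'.
have aa : aT d alpha T = expR (qexp d alpha * ln (T / ln T))
  by rewrite /aT powRE'.
have e1 : expR (d%:R^-1) ^+ d = expR 1 :> R by rewrite -expRM_natl mulfV.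
have eR : Rad ^+ d = expR (d%:R * ln Rad) by rewrite expRM_natl lnK.
set E := ln (qexp d alpha) + ln Rad - ln t + qexp d alpha * ln (T / ln T).
have ex : qexp d alpha * Rad / t * aT d alpha T = expR E.
  by rewrite /E !expRD expRN !lnK ?posrE // aa.
have x0 : 0 < expR E := expR_gt0 _.
rewrite ex powRE' // expRK.
apply: le_trans (ler_wpM2r (ltW (expR_gt0 _)) hN) _.
rewrite !powRE' // exprMn e1 eR ra -expRM_natl.
rewrite le_eqVlt; apply/orP; left; apply/eqP.
rewrite -!mulrA; congr (Cd * (expR 1 * _)); rewrite -!expRD; congr expR.
rewrite /E /qexp; field; exact: ad0.
Qed.

Section S6.
Variables (d0 : measure_display) (Om : measurableType d0)
  (R : realType) (P : probability Om R) (d : nat) (alpha : R)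
  (xi : 'rV[int]_d -> {RV P >-> R}).

Lemma cost_meas T z ys : (forall z w, 1 <= xi z w) ->
  measurable_fun setT (fun w => path_cost d alpha (fun y => xi y w) T z ys).
Proof.
move=> hxi; rewrite /path_cost; apply: measurable_sum => j.
set c := qexp d alpha * norm1 d (nth z (z :: ys) j - nth z ys j).
set k := toZ d alpha T (nth z ys j).
have -> : (fun w => c / xiT d alpha (fun y => xi y w) T (nth z ys j)) =
          (fun w => (c * aT d alpha T) * (xi k w) `^ (-1)).
  apply/funext => w; rewrite /xiT -/k.
  rewrite powR_inv1; last first.
    by apply: le_trans (hxi k w).
  by rewrite invfM invrK mulrA mulrAC.
apply: measurable_realfun.measurable_funM; first exact: measurable_cst.
exact: (measurableT_comp (measurable_realfun.measurable_powR (-1)) (measurable_funPT (xi k))).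
Qed.

Lemma union_bound (I : eqType) (s : seq I) (A : I -> set Om) (c : R) :
  (forall y, measurable (A y)) -> (forall y, (P (A y) <= c%:E)%E) ->
  measurable (\big[setU/set0]_(y <- s) A y) /\
  (P (\big[setU/set0]_(y <- s) A y) <= ((size s)%:R * c)%:E)%E.
Proof.
move=> mA hA; elim: s => [|y s [mU hU]].
  by rewrite big_nil measure0 mul0r; split.
rewrite big_cons; split; first exact: measurableU.
apply: le_trans (measureU2 _ (mA y) mU) _.
rewrite /= -addn1 natrD mulrDl mul1r EFinD addeC.
exact: leeD.
Qed.

Lemma mem_bigU (I : eqType) (s : seq I) (A : I -> set Om) y :
  y \in s -> A y `<=` \big[setU/set0]_(y <- s) A y.
Proof.
elim: s => [//|x s IH]; rewrite inE big_cons => /orP[/eqP->|ys] w Aw.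
  by left.
by right; apply: IH.
Qed.
End S6.

Lemma cost_ge0 (R : realType) (d : nat) (alpha : R) xi T z ys :
  0 <= qexp d alpha -> (forall y, 0 < xiT d alpha xi T y) ->
  0 <= path_cost d alpha xi T z ys.
Proof.
move=> hq hX; apply: sumr_ge0 => j _; apply: divr_ge0.
  by apply: mulr_ge0 => //; exact: norm1_ge0.
exact: ltW.
Qed.

Theorem lemma3p6 (d0 : measure_display) (Om : measurableType d0)
  (R : realType) (P : probability Om R) (d : nat) (alpha : R)
  (xi : 'rV[int]_d -> {RV P >-> R})
  (Cd T Rad t : R) :
  (0 < d)%N -> d%:R < alpha ->
  (* xi(z), z in Z^d, i.i.d. Pareto(alpha) with values in [1, oo) *)
  mutually_independent xi ->
  (forall z x, 1 <= x -> P [set w | x < xi z w] = (x `^ (- alpha))%:E) ->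
  (forall z w, 1 <= xi z w) ->
  (* the constant C_d *)
  0 < Cd ->
  (forall T' Rad', 1 < T' -> 1 < Rad' * rT d alpha T' ->
     forall s : seq 'rV[R]_d, uniq s -> all (fun y => y \in LTball d alpha T' 0 Rad') s ->
       (size s)%:R <= Cd * Rad' ^+ d * rT d alpha T' ^+ d) ->
  1 < T -> 0 < Rad -> 0 < t -> 1 <= Rad * rT d alpha T ->
  ([set w | exists z, LT d alpha T z /\ ~ l1ball d 0 Rad z /\
        hT d alpha (fun y => xi y w) T z <= t]
   `<=` [set w | exists y, LTball d alpha T 0 Rad y /\
        qexp d alpha * Rad / t <= xiT d alpha (fun y => xi y w) T y])
  /\
  (P [set w | exists z, LT d alpha T z /\ ~ l1ball d 0 Rad z /\
        (hT d alpha (fun y => xi y w) T z <= t)%R]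
   <= (Cd * expR 1 * qexp d alpha `^ (- alpha) * Rad `^ (d%:R - alpha)
       * t `^ alpha)%R%:E)%E.
Proof.
move=> dpos da _ hP hxi hC hcount hT1 hR ht hRr.
have r0 : 0 < rT d alpha T := rT_gt0 R d alpha T hT1.
have a0 : 0 < aT d alpha T := aT_gt0 R d alpha T hT1.
have q0 : 0 < qexp d alpha := qexp_gt0 dpos da.
have e0 : 1 < expR (d%:R^-1) :> R by rewrite expR_gt1 invr_gt0 ltr0n.
set S := LTball d alpha T 0 Rad.
set Rad' := expR (d%:R^-1) * Rad.
have hK : forall s, uniq s -> all (fun y => y \in S) s ->
    (size s)%:R <= Cd * Rad' ^+ d * rT d alpha T ^+ d.
  move=> s us al; apply: hcount => //.
    rewrite /Rad' -mulrA; apply: (lt_le_trans e0).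
    by rewrite ler_peMr // ltW // (lt_trans ltr01).
  apply: sub_all al => y /set_mem [Ly By]; apply/mem_set; split => //.
  move: By; rewrite /l1ball /= => h; apply: (lt_trans h).
  by rewrite /Rad' ltr_pMl.
have [s0 [us0 al0 cov0]] := @max_list _ _ _ _ hK.
have LT0 : LT d alpha T 0 by apply/forallP => i; rewrite mxE mulr0 rpred0.
have S0 : S 0 by split => //; rewrite /l1ball /= subr0 norm10.
have s0n : s0 != [::] by apply/eqP => e; have := cov0 _ S0; rewrite e.
have hX : forall w y, 0 < xiT d alpha (fun y => xi y w) T y.
  move=> w y; rewrite /xiT divr_gt0 //; exact: lt_le_trans ltr01 (hxi _ _).
have ne : forall w z, [set c | exists ys : seq 'rV[R]_d,
         all (LT d alpha T) ys /\ last z ys = 0 /\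
         c = path_cost d alpha (fun y => xi y w) T z ys] !=set0.
  move=> w z; exists (path_cost d alpha (fun y => xi y w) T z [:: 0]).
  by exists [:: 0]; rewrite /= LT0.
have lb : forall w z, has_lbound [set c | exists ys : seq 'rV[R]_d,
         all (LT d alpha T) ys /\ last z ys = 0 /\
         c = path_cost d alpha (fun y => xi y w) T z ys].
  move=> w z; exists 0 => c [ys [_ [_ ->]]].
  by apply: cost_ge0; [exact: ltW | exact: hX].
have part1 : forall w z, LT d alpha T z -> ~ l1ball d 0 Rad z ->
    hT d alpha (fun y => xi y w) T z <= t ->
    exists2 y, y \in s0 & qexp d alpha * Rad / t <= xiT d alpha (fun y => xi y w) T y.
  move=> w z Lz nz hz.
  have [m ms hm] := @argmax_list _ _ (xiT d alpha (fun y => xi y w) T) _ s0n.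
  set M := xiT d alpha (fun y => xi y w) T m.
  have M0 : 0 < M by exact: hX.
  have hB : forall y, LT d alpha T y -> norm1 d y < Rad ->
      xiT d alpha (fun y => xi y w) T y <= M.
    move=> y Ly Ny; apply: hm; apply: cov0; split => //.
    by rewrite /l1ball /= subr0.
  have nz' : Rad <= norm1 d z.
    by rewrite leNgt; apply/negP => h; apply: nz; rewrite /l1ball /= subr0.
  have low : qexp d alpha * Rad / M <= hT d alpha (fun y => xi y w) T z.
    apply: lb_le_inf; first exact: ne.
    move=> c [ys [al [hl ->]]].
    have := @path_cost_lb R d alpha _ T M Rad (ltW q0) M0 (hX w) hB ys z al hl.
    by rewrite (min_idPr nz') mulrAC.
  exists m => //.
  have h := le_trans low hz.
  rewrite ler_pdivrMr // in h.
  by rewrite ler_pdivrMr // [X in _ <= X]mulrC.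
split.
  move=> w [z [Lz [nz hz]]].
  have [y ys hy] := part1 w z Lz nz hz.
  exists y; split => //.
  by move: (allP al0 y ys) => /set_mem.
set x0 := qexp d alpha * Rad / t * aT d alpha T.
have x00 : 0 < x0 by apply: mulr_gt0 => //; apply: divr_gt0 => //; apply: mulr_gt0.
have alpha0 : 0 < alpha by apply: le_lt_trans da; exact: ler0n.
set A := fun y : 'rV[R]_d => [set w | (x0 <= xi (toZ d alpha T y) w)%R].
have mxi : forall k, measurable_fun setT (xi k) := fun k => measurable_funPT (xi k).
have mA : forall y, measurable (A y) := fun y => @meas_le _ _ _ _ x0 (mxi _).
have hA : forall y, (P (A y) <= (x0 `^ (- alpha))%:E)%E.
  by move=> y; apply: tail_le => //; exact: hP.
have [mU hU] := @union_bound _ _ _ P _ s0 A _ mA hA.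
have EU : [set w | exists z, LT d alpha T z /\ ~ l1ball d 0 Rad z /\
        (hT d alpha (fun y => xi y w) T z <= t)%R] `<=` \big[setU/set0]_(y <- s0) A y.
  move=> w [z [Lz [nz hz]]]; have [y ys hy] := part1 w z Lz nz hz.
  apply: (@mem_bigU _ _ _ s0 A y ys); rewrite /A /=.
  by move: hy; rewrite /xiT ler_pdivlMr.
have r0' : rT d alpha T != 0 by rewrite gt_eqF.
pose emb' := emb R d alpha T.
have eqE : [set w | exists z, LT d alpha T z /\ ~ l1ball d 0 Rad z /\
        (hT d alpha (fun y => xi y w) T z <= t)%R] =
  [set w | exists zk : 'rV[int]_d, ~ l1ball d 0 Rad (emb' zk) /\
     (forall n : nat, exists ks : seq 'rV[int]_d, last (emb' zk) (map emb' ks) = 0 /\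
        path_cost d alpha (fun y => xi y w) T (emb' zk) (map emb' ks) < t + (n.+1%:R)^-1)].
  apply/seteqP; split => w /=.
    move=> [z [Lz [nz hz]]]; exists (toZ d alpha T z).
    rewrite /emb' emb_toZ //; split => // n.
    have : hT d alpha (fun y => xi y w) T z < t + n.+1%:R^-1.
      by apply: le_lt_trans hz _; rewrite ltrDl invr_gt0 ltr0n.
    rewrite /hT => /(inf_lt (ne w z)) [c [ys [al [hl ->]]] hc].
    exists (map (toZ d alpha T) ys).
    have hm : map (emb R d alpha T) (map (toZ d alpha T) ys) = ys.
      rewrite -map_comp; apply: map_id_in => y yin /=.
      apply: emb_toZ => //; exact: (allP al).
    by rewrite hm.
  move=> [zk [nz hn]]; exists (emb' zk); split; first exact: LT_emb.
  split => //.
  rewrite leNgt; apply/negP => hlt.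
  set H := hT d alpha (fun y => xi y w) T (emb' zk) in hlt *.
  set eps := H - t.
  have eps0 : 0 < eps by rewrite subr_gt0.
  set n := Num.truncn (eps^-1).
  have hn1 : n.+1%:R^-1 < eps.
    rewrite -[ltRHS]invrK ltf_pV2 ?posrE ?ltr0n ?invr_gt0 //.
    exact: truncnS_gt.
  have [ks [hl hc]] := hn n.
  have h1 : H <= path_cost d alpha (fun y => xi y w) T (emb' zk) (map emb' ks).
    apply: (ge_inf (lb w (emb' zk))); exists (map emb' ks); split => //.
    by rewrite all_map; apply/allP => k _ /=; exact: LT_emb.
  have h2 : t + n.+1%:R^-1 < t + eps by rewrite ltrD2l.
  have : H < H.
    apply: (le_lt_trans h1); apply: (lt_trans hc); apply: (lt_le_trans h2).
    by rewrite /eps addrC subrK.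
  by rewrite ltxx.
have mE : measurable [set w | exists z, LT d alpha T z /\ ~ l1ball d 0 Rad z /\
        (hT d alpha (fun y => xi y w) T z <= t)%R].
  rewrite eqE.
  apply: meas_exists_count => zk; apply: meas_and; apply: meas_forall_nat => n.
  apply: meas_exists_count => ks; apply: meas_and; apply: meas_lt.
  exact: cost_meas.
apply: le_trans (le_measure _ (mem_set mE) (mem_set mU) EU) _.
apply: le_trans hU _; rewrite lee_fin.
apply: final_arith => //.
exact: hK.
Qed.
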